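(* For all integers $n\ge1$, $k\ge1$ and every sequence $\boldsymbol a$ of positive reals, with $\alpha_n(j;t)=A_n(j)\big(t^j-(t-1)^j\big)$, \[ \theta_{n;k}(t)=\frac1{k!}\det\begin{pmatrix} \alpha_n(1;t)&-1&0&\cdots&0\\ \alpha_n(2;t)&\alpha_n(1;t)&-2&\cdots&0\\ \vdots&\vdots&\vdots&\ddots&\vdots\\ \alpha_n(k-1;t)&\alpha_n(k-2;t)&\alpha_n(k-3;t)&\cdots&-(k-1)\\ \alpha_n(k;t)&\alpha_n(k-1;t)&\alpha_n(k-2;t)&\cdots&\alpha_n(1;t) \end{pmatrix}, \] i.e. the $k\times k$ matrix with entries $M_{i,j}=\alpha_n(i-j+1;t)$ for $j\le i$, $M_{i,i+1}=-i$, and $M_{i,j}=0$ for $j\ge i+2$.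
   Context: Let $\boldsymbol a=(a_j)_{j\ge1}$ be a sequence of positive reals. For integers $n\ge1$, $k\ge0$ let $\mathcal M_{n,k}=\{(\ell_1,\dots,\ell_k)\in\mathbb N^k: n\ge\ell_1\ge\cdots\ge\ell_k\ge1\}$. For $\vec\ell\in\mathcal M_{n,k}$ let $\sigma(\vec\ell)=|\{1\le j\le k-1:\ell_j=\ell_{j+1}\}|$ and $w(\vec\ell)=\prod_{j=1}^k a_{\ell_j}$. Define $\theta_{n;k}(t)=\sum_{\vec\ell\in\mathcal M_{n,k}}w(\vec\ell)\,t^{\sigma(\vec\ell)}$, and $A_n(j)=\sum_{m=1}^n a_m^j$. *)

(* Defs.v *)
From HB Require Import structures.
From mathcomp Require Import all_boot all_order all_algebra.
Set Implicit Arguments. Unset Strict Implicit. Unset Printing Implicit Defensive.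
Import Order.TTheory GRing.Theory Num.Theory.
Local Open Scope ring_scope.

(* A sequence a = (a_j)_{j>=1} is a function a : nat -> R (a 0 unused). *)

(* A k-tuple of elements of 'I_n, read as (l_1,...,l_k) with l_j = val + 1,
   so that l_j ranges over {1,...,n}. *)
Definition lseq (n k : nat) (l : k.-tuple 'I_n) : seq nat :=
  [seq (val i).+1 | i <- l].

Definition inM (n k : nat) (l : k.-tuple 'I_n) : bool :=
  sorted geq (lseq l).

Definition sigma (n k : nat) (l : k.-tuple 'I_n) : nat :=
  \sum_(j < k.-1) (nth 0%N (lseq l) j == nth 0%N (lseq l) j.+1).

Definition weight (R : ringType) (a : nat -> R) (n k : nat)
  (l : k.-tuple 'I_n) : R :=
  \prod_(x <- lseq l) a x.

Definition theta (R : comRingType) (a : nat -> R) (n k : nat) (t : R) : R :=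
  \sum_(l : k.-tuple 'I_n | inM l) weight a l * t ^+ sigma l.

Definition Apow (R : ringType) (a : nat -> R) (n j : nat) : R :=
  \sum_(1 <= m < n.+1) a m ^+ j.

Definition alpha (R : ringType) (a : nat -> R) (n j : nat) (t : R) : R :=
  Apow a n j * (t ^+ j - (t - 1) ^+ j).

(* The k x k matrix, 0-based indices i, j:
   entry alpha(i-j+1) if j <= i, -(i+1) if j = i+1, 0 otherwise
   (matches the 1-based M_{i,j} = alpha(i-j+1), M_{i,i+1} = -i). *)
Definition thetaMx (R : ringType) (a : nat -> R) (n k : nat) (t : R) : 'M[R]_k :=
  \matrix_(i < k, j < k)
    (if (j <= i)%N then alpha a n (i - j).+1 t
     else if j == i.+1 :> nat then - (i.+1)%:R else 0).

(* Main.v *)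
Require Import Defs.
From HB Require Import structures.
From mathcomp Require Import all_boot all_order all_algebra.
From mathcomp Require Import ring.
Set Implicit Arguments. Unset Strict Implicit. Unset Printing Implicit Defensive.
Import Order.TTheory GRing.Theory Num.Theory.
Local Open Scope ring_scope.

Fixpoint sg (s : seq nat) : nat :=
  match s with
  | x :: ((y :: _) as s') => ((x == y) + sg s')%N
  | _ => 0%N
  end.

Lemma sumsg (s : seq nat) :
  (\sum_(j < (size s).-1) (nth 0%N s j == nth 0%N s j.+1))%N = sg s.
Proof.
elim: s => [|x [|y s] IH]; first by rewrite big_ord0.
  by rewrite big_ord0.
rewrite /= big_ord_recl /=; congr (_ + _)%N.
by rewrite -[RHS]/(sg (y :: s)) -IH; apply: eq_bigr => i _; rewrite add0n.
Qed.

Lemma sg_nseq (x r : nat) (s : seq nat) : x \notin s ->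
  sg (nseq r x ++ s) = (r.-1 + sg s)%N.
Proof.
move=> xs; elim: r => [|[|r] IH] //=.
  by case: s xs IH => [|y s] //=; rewrite inE negb_or => /andP[/negbTE -> _].
by move: IH => /= ->; rewrite eqxx.
Qed.

Fixpoint enumM (m k : nat) : seq (seq nat) :=
  match m with
  | 0 => if k is 0 then [:: [::]] else [::]
  | m'.+1 => [seq nseq r m ++ s | r <- iota 0 k.+1, s <- enumM m' (k - r)]
  end.

Definition okS (m k : nat) (s : seq nat) : bool :=
  [&& size s == k, sorted geq s & all (fun x => 0 < x <= m)%N s].

Lemma sorted_nseq_cat (x r : nat) (s : seq nat) :
  all (fun y => y <= x)%N s -> sorted geq s -> sorted geq (nseq r x ++ s).
Proof.
move=> hs ss; elim: r => [|r IH] //=.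
case: r IH => [|r] /= IH.
  by case: s hs ss {IH} => [|y s] //= /andP[hy _] ->; rewrite andbT.
by rewrite IH leqnn.
Qed.

Lemma enumM_ok (m k : nat) (s : seq nat) : (s \in enumM m k) = okS m k s.
Proof.
elim: m k s => [|m IHm] k s.
  rewrite /okS; case: k => [|k] /=.
    rewrite inE; case: s => [|x s] //=.
  case: s => [|x s]; first by [].
  rewrite in_nil /=; case: x => [|x] /=; first by rewrite !andbF.
  by rewrite !andbF.
apply/idP/idP.
  move=> /allpairsPdep [r [s' [hr hs' ->]]].
  move: hs'; rewrite IHm /okS => /and3P[/eqP sz ss al].
  rewrite mem_iota in hr.
  rewrite size_cat size_nseq sz subnKC; last by move: hr; rewrite add0n ltnS.
  rewrite eqxx /= all_cat.
  rewrite sorted_nseq_cat //; last by apply: sub_all al => y /andP[_ ]; apply: leqW.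
  rewrite /= all_nseq /= leqnn orbT /=.
  by apply: sub_all al => y /andP[-> /leqW].
elim: s k => [|x s IHs] k.
  rewrite /okS => /and3P[/eqP <- _ _]; apply/allpairsPdep; exists 0%N, [::]; split => //.
rewrite /okS => /and3P[/eqP <- ss /andP[/andP[x0 xm] al]].
have ss' : sorted geq s by apply: path_sorted ss.
have alx : all (fun y => y <= x)%N s.
  have gtr : transitive geq by move=> a b c h1 h2; exact: leq_trans h2 h1.
  exact: order_path_min gtr ss.
case: (ltngtP x m.+1) xm => // [xlt|xeq] _.
  apply/allpairsPdep; exists 0%N, (x :: s); split => //.
  rewrite IHm /okS ss /= eqxx x0 /= -ltnS xlt /=.
  by apply/allP => y ys; have /andP[y0 _] := allP al y ys; rewrite y0 /= (leq_trans (allP alx y ys)) // -ltnS.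
have : s \in enumM m.+1 (size s).
  apply: IHs; rewrite /okS eqxx ss' /=.
  by apply/allP => y ys; have /andP[y0 _] := allP al y ys; rewrite y0 /= -xeq (allP alx y ys).
move=> /allpairsPdep [r [s' [hr hs' es]]].
apply/allpairsPdep; exists r.+1, s'; split.
- by move: hr; rewrite !mem_iota !add0n ltnS.
- by rewrite subSS.
- by rewrite es xeq.
Qed.

Lemma enumM_notin (m k : nat) (s : seq nat) : s \in enumM m k -> m.+1 \notin s.
Proof.
rewrite enumM_ok => /and3P[_ _ al]; apply/negP => /(allP al) /=.
by rewrite ltnn.
Qed.

Lemma enumM_uniq (m k : nat) : uniq (enumM m k).
Proof.
elim: m k => [|m IHm] k; first by case: k.
apply: allpairs_uniq_dep; first exact: iota_uniq.
  by move=> r _; apply: IHm.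
move=> [r1 s1] [r2 s2] /allpairsPdep [r1' [s1' [_ h1 [e1 e1']]]]
  /allpairsPdep [r2' [s2' [_ h2 [e2 e2']]]] /= E.
subst r1' r2' s1' s2'.
have n1 : m.+1 \notin s1 by exact: (enumM_notin (k := (k - r1)%N)).
have n2 : m.+1 \notin s2 by exact: (enumM_notin (k := (k - r2)%N)).
have : count_mem m.+1 (nseq r1 m.+1 ++ s1) = count_mem m.+1 (nseq r2 m.+1 ++ s2) by rewrite E.
rewrite !count_cat !count_nseq /= eqxx !mul1n.
rewrite (count_memPn n1) (count_memPn n2) !addn0 => er; subst r2.
move/eqP: E; rewrite eqseq_cat // eqxx /= => /eqP -> //.
Qed.

Definition wS (R : comNzRingType) (a : nat -> R) (s : seq nat) : R := \prod_(x <- s) a x.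
Definition Ssum (R : comNzRingType) (a : nat -> R) (t : R) (m k : nat) : R :=
  \sum_(s <- enumM m k) wS a s * t ^+ sg s.
Definition uu (R : comNzRingType) (x t : R) (r : nat) : R := x ^+ r * t ^+ r.-1.

Lemma prod_nseq (R : comNzRingType) (a : nat -> R) (r y : nat) :
  \prod_(x <- nseq r y) a x = a y ^+ r.
Proof. by elim: r => [|r IH]; rewrite ?big_nil ?expr0 // big_cons IH exprS. Qed.

Lemma Ssum0 (R : comNzRingType) (a : nat -> R) (t : R) (k : nat) :
  Ssum a t 0 k = (k == 0)%:R.
Proof.
by case: k => [|k]; rewrite /Ssum /= ?big_nil // big_cons big_nil /wS big_nil mul1r expr0 addr0.
Qed.

Lemma SsumS (R : comNzRingType) (a : nat -> R) (t : R) (m k : nat) :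
  Ssum a t m.+1 k = \sum_(r < k.+1) uu (a m.+1) t r * Ssum a t m (k - r).
Proof.
rewrite /Ssum -[enumM m.+1 k]/([seq nseq r m.+1 ++ s | r <- iota 0 k.+1, s <- enumM m (k - r)]) big_allpairs_dep.
rewrite (_ : iota 0 k.+1 = index_iota 0 k.+1) ?subn0 // big_mkord.
apply: eq_bigr => r _; rewrite mulr_sumr; apply: eq_big_seq => s hs.
rewrite /wS big_cat /= prod_nseq sg_nseq; last exact: (enumM_notin hs).
by rewrite exprD /uu mulrACA.
Qed.

Lemma lseq_inj (n k : nat) : injective (@lseq n k).
Proof.
move=> l1 l2 E; apply: val_inj; move: E; rewrite /lseq.
by apply: inj_map => i j /= [] /val_inj.
Qed.

Lemma theta_Ssum (R : comNzRingType) (a : nat -> R) (n k : nat) (t : R) :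
  theta a n.+1 k t = Ssum a t n.+1 k.
Proof.
rewrite /theta -big_filter.
have -> : \sum_(l <- [seq x <- index_enum (k.-tuple 'I_n.+1) | inM x])
     weight a l * t ^+ sigma l =
  \sum_(s <- map (@lseq n.+1 k) [seq x <- index_enum (k.-tuple 'I_n.+1) | inM x])
     wS a s * t ^+ sg s.
  rewrite big_map; apply: eq_bigr => l _; rewrite /weight /wS /sigma.
  by rewrite -(sumsg (lseq l)) /lseq size_map size_tuple.
apply: perm_big; apply: uniq_perm.
- by rewrite (map_inj_uniq (@lseq_inj _ _)) filter_uniq // index_enum_uniq.
- exact: enumM_uniq.
move=> s; rewrite enumM_ok; apply/idP/idP.
  move=> /mapP [l]; rewrite mem_filter => /andP[hl _] ->.
  rewrite /okS -/(inM l) hl /lseq size_map size_tuple eqxx /= all_map.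
  by apply/allP => i _ /=; rewrite ltn_ord.
rewrite /okS => /and3P[/eqP sz ss al].
have sz' : size (map (fun x => @inord n x.-1) s) == k by rewrite size_map sz.
have e : lseq (Tuple sz') = s.
  rewrite /lseq /= -map_comp; apply: map_id_in => x /(allP al) /andP[x0 xn] /=.
  by rewrite inordK ?prednK // prednK.
apply/mapP; exists (Tuple sz'); last by rewrite e.
by rewrite mem_filter /inM e ss mem_index_enum.
Qed.
Definition conv (R : comNzRingType) (f g : nat -> R) (k : nat) : R :=
  \sum_(i < k.+1) f i * g (k - i)%N.

Definition Pk (R : comNzRingType) (k : nat) (f : nat -> R) : {poly R} :=
  \poly_(i < k.+1) f i.

Lemma convP (R : comNzRingType) (K k : nat) (f g : nat -> R) : (k <= K)%N ->
  conv f g k = (Pk K f * Pk K g)`_k.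
Proof.
move=> hk; rewrite coefM; apply: eq_bigr => i _; rewrite !coef_poly.
have hi : (i <= K)%N by apply: leq_trans hk; rewrite -ltnS.
by rewrite ltnS hi ltnS (leq_trans (leq_subr _ _) hk).
Qed.

Lemma convPl (R : comNzRingType) (k : nat) (f g h : nat -> R) :
  conv f (conv g h) k = (Pk k f * (Pk k g * Pk k h))`_k.
Proof.
rewrite coefM; apply: eq_bigr => i _; rewrite coef_poly ltn_ord.
by rewrite (convP (K := k)) // leq_subr.
Qed.

Lemma convPr (R : comNzRingType) (k : nat) (f g h : nat -> R) :
  conv (conv f g) h k = ((Pk k f * Pk k g) * Pk k h)`_k.
Proof.
rewrite coefM; apply: eq_bigr => i _; rewrite coef_poly ltnS leq_subr.
by rewrite (convP (K := k)) // -ltnS.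
Qed.

Lemma conv_assoc (R : comNzRingType) (k : nat) (f g h : nat -> R) :
  conv f (conv g h) k = conv (conv f g) h k.
Proof. by rewrite convPl convPr mulrA. Qed.

Lemma conv_comm (R : comNzRingType) (k : nat) (f g : nat -> R) :
  conv f g k = conv g f k.
Proof. by rewrite !(convP (K := k)) // mulrC. Qed.

Lemma conv_eq (R : comNzRingType) (k : nat) (f1 f2 g1 g2 : nat -> R) :
  f1 =1 f2 -> g1 =1 g2 -> conv f1 g1 k = conv f2 g2 k.
Proof. by move=> e1 e2; apply: eq_bigr => i _; rewrite e1 e2. Qed.

Lemma convDl (R : comNzRingType) (k : nat) (f1 f2 g : nat -> R) :
  conv (fun j => f1 j + f2 j) g k = conv f1 g k + conv f2 g k.
Proof. by rewrite /conv -big_split; apply: eq_bigr => i _; rewrite mulrDl. Qed.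

Lemma keyt (R : comNzRingType) (t : R) (r : nat) :
  \sum_(j < r.+1) (t ^+ j - (t - 1) ^+ j) * t ^+ (r - j)%N.-1 = r%:R * t ^+ r.-1.
Proof.
case: r => [|s].
  by rewrite big_ord1 !expr0 subrr !mul0r.
rewrite big_ord_recr /= subnn expr0 mulr1.
have -> : \sum_(j < s.+1) (t ^+ j - (t - 1) ^+ j) * t ^+ (s.+1 - j)%N.-1 =
   \sum_(j < s.+1) t ^+ s - \sum_(j < s.+1) t ^+ (s.+1.-1 - j)%N * (t - 1) ^+ j.
  rewrite -sumrB; apply: eq_bigr => j _.
  have hj : (j <= s)%N by rewrite -ltnS.
  by rewrite subSn //= mulrBl -exprD subnKC // mulrC.
rewrite subrXX (_ : t - (t - 1) = 1); last by rewrite opprB addrCA subrr addr0.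
by rewrite mul1r subrK sumr_const card_ord mulr_natl.
Qed.


Lemma ru (R : comNzRingType) (x t : R) (r : nat) :
  r%:R * uu x t r = conv (fun j => x ^+ j * (t ^+ j - (t - 1) ^+ j)) (uu x t) r.
Proof.
rewrite /conv.
have -> : \sum_(i < r.+1) x ^+ i * (t ^+ i - (t - 1) ^+ i) * uu x t (r - i)%N =
   x ^+ r * \sum_(i < r.+1) (t ^+ i - (t - 1) ^+ i) * t ^+ (r - i)%N.-1.
  rewrite mulr_sumr; apply: eq_bigr => i _.
  have hi : (i <= r)%N by rewrite -ltnS.
  rewrite /uu mulrACA -exprD subnKC //.
by rewrite keyt /uu mulrCA.
Qed.

Lemma alphaS (R : comNzRingType) (a : nat -> R) (m j : nat) (t : R) :
  alpha a m.+1 j t = a m.+1 ^+ j * (t ^+ j - (t - 1) ^+ j) + alpha a m j t.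
Proof.
by rewrite /alpha /Apow big_nat_recr //= mulrDl addrC.
Qed.

Lemma alpha0 (R : comNzRingType) (a : nat -> R) (j : nat) (t : R) :
  alpha a 0 j t = 0.
Proof. by rewrite /alpha /Apow big_geq // mul0r. Qed.

Lemma newton (R : comNzRingType) (a : nat -> R) (t : R) (m k : nat) :
  k%:R * Ssum a t m k = conv (fun j => alpha a m j t) (Ssum a t m) k.
Proof.
elim: m k => [|m IH] k.
  rewrite Ssum0 /conv big1 => [|i _]; last by rewrite alpha0 mul0r.
  by case: k => [|k]; rewrite ?mulr0 ?mul0r.
set x := a m.+1.
set d := (fun j => x ^+ j * (t ^+ j - (t - 1) ^+ j)).
have eS : Ssum a t m.+1 =1 conv (uu x t) (Ssum a t m) by move=> j; rewrite SsumS.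
have E1 : conv (fun j => alpha a m j t) (conv (uu x t) (Ssum a t m)) k =
    conv (uu x t) (fun i => i%:R * Ssum a t m i) k.
  rewrite conv_assoc (conv_eq _ (fun j => conv_comm j _ _) (frefl _)) -conv_assoc.
  by apply: conv_eq => // j; rewrite IH.
have E2 : conv d (Ssum a t m.+1) k = conv (fun r => r%:R * uu x t r) (Ssum a t m) k.
  rewrite (conv_eq _ (frefl _) eS) conv_assoc.
  by apply: conv_eq => // j; rewrite ru.
rewrite (conv_eq _ (fun j => alphaS a m j t) (frefl _)) convDl.
rewrite -/x -/d E2 (conv_eq _ (frefl _) eS) E1.
rewrite eS /conv mulr_sumr -big_split; apply: eq_bigr => i _.
have hi : (i <= k)%N by rewrite -ltnS.
rewrite -{1}(subnKC hi) natrD mulrDl.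
rewrite mulrA; congr (_ + _).
by rewrite mulrCA mulrA.
Qed.

Definition Ment (R : comNzRingType) (a : nat -> R) (n : nat) (t : R) (i j : nat) : R :=
  if (j <= i)%N then alpha a n (i - j).+1 t
  else if j == i.+1 then - (i.+1)%:R else 0.

Definition Hm (R : comNzRingType) (a : nat -> R) (n : nat) (t : R) (k : nat)
  (f : nat -> R) : 'M[R]_k :=
  \matrix_(i < k, j < k) (if i == k.-1 :> nat then f (k.-1 - j)%N else Ment a n t i j).

Lemma thetaMx_H (R : comNzRingType) (a : nat -> R) (n k : nat) (t : R) :
  thetaMx a n k t = Hm a n t k (fun m => alpha a n m.+1 t).
Proof.
apply/matrixP => i j; rewrite !mxE /Ment.
case E : (nat_of_ord i == k.-1); last by [].
move/eqP: E => E; rewrite E -ltnS prednK ?ltn_ord //.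
by apply: leq_ltn_trans (ltn_ord i).
Qed.

Lemma Ssum_0 (R : comNzRingType) (a : nat -> R) (t : R) (m : nat) : Ssum a t m 0 = 1.
Proof.
elim: m => [|m IH]; first by rewrite Ssum0.
by rewrite SsumS big_ord1 IH /uu !expr0 !mulr1.
Qed.

Lemma minor1 (R : comNzRingType) (a : nat -> R) (n : nat) (t : R) (k : nat) (f : nat -> R) :
  row' ord_max (col' ord_max (Hm a n t k.+2 f)) = Hm a n t k.+1 (fun m => alpha a n m.+1 t).
Proof.
apply/matrixP => i j; rewrite !mxE /= /bump.
have hi : (i <= k)%N by rewrite -ltnS; apply: ltn_ord.
have hj : (j <= k)%N by rewrite -ltnS; apply: ltn_ord.
rewrite (ltnNge k i) hi (ltnNge k j) hj /= !add0n.
rewrite (ltn_eqF (hi : (i < k.+1)%N)) /Ment.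
case E : (nat_of_ord i == k); last by [].
by move/eqP: E => ->; rewrite hj.
Qed.

Lemma minor2 (R : comNzRingType) (a : nat -> R) (n : nat) (t : R) (k : nat) (f : nat -> R) :
  row' (widen_ord (leqnSn k.+1) ord_max) (col' ord_max (Hm a n t k.+2 f)) =
  Hm a n t k.+1 (fun m => f m.+1).
Proof.
apply/matrixP => i j; rewrite !mxE /= /bump.
have hi : (i <= k)%N by rewrite -ltnS; apply: ltn_ord.
have hj : (j <= k)%N by rewrite -ltnS; apply: ltn_ord.
rewrite (ltnNge k j) hj /= add0n.
case E : (nat_of_ord i == k).
  move/eqP: E => ->; rewrite leqnn add1n eqxx subSn //.
have hik : (i < k)%N by rewrite ltn_neqAle E hi.
rewrite (leqNgt k i) hik /= add0n (ltn_eqF (ltn_trans hik (ltnSn k))).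
by [].
Qed.

Lemma newtonS (R : comNzRingType) (a : nat -> R) (t : R) (n k : nat) :
  \sum_(m < k.+1) alpha a n m.+1 t * Ssum a t n (k - m)%N = k.+1%:R * Ssum a t n k.+1.
Proof.
rewrite newton /conv [RHS]big_ord_recl /=.
rewrite (_ : alpha a n 0 t = 0) ?mul0r ?add0r; last by rewrite /alpha !expr0 subrr mulr0.
by apply: eq_bigr => i _.
Qed.

Lemma detH (R : comNzRingType) (a : nat -> R) (n : nat) (t : R) (k : nat) :
  forall f : nat -> R, \det (Hm a n t k.+1 f) =
    k`!%:R * \sum_(m < k.+1) f m * Ssum a t n (k - m)%N.
Proof.
elim: k => [|k IH] f.
  by rewrite det_mx11 mxE /= big_ord1 Ssum_0 !mul1r mulr1.
rewrite (expand_det_col _ ord_max) big_ord_recr big_ord_recr /=.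
rewrite big1 ?add0r; last first.
  move=> i _; rewrite !mxE /= /Ment.
  have hi := ltn_ord i.
  rewrite (ltn_eqF (ltn_trans hi (ltnSn k))) (ltnNge k i) (ltnW hi) /= eqSS (gtn_eqF hi).
  by rewrite mul0r.
rewrite /cofactor minor1 minor2 !IH newtonS !mxE /= /Ment.
rewrite (ltn_eqF (ltnSn k)) ltnn eqxx subnn.
have s1 : (-1) ^+ (k + k.+1) = -1 :> R by rewrite -signr_odd oddD /= addbN addbb.
have s2 : (-1) ^+ (k.+1 + k.+1) = 1 :> R by rewrite -signr_odd oddD addbb.
rewrite s1 s2.
rewrite factS natrM (@big_ord_recl _ _ _ k.+1) /= subn0.
have -> : \sum_(i < k.+1) f (bump 0 i) * Ssum a t n (k.+1 - bump 0 i) =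
  \sum_(m < k.+1) f m.+1 * Ssum a t n (k - m).
  by apply: eq_bigr => i _; rewrite /bump /= add1n subSS.
rewrite -mulNrn; ring.
Qed.

Unset Implicit Arguments.
Theorem mainTheorem4 (R : realFieldType) (a : nat -> R)
  (ha : forall j : nat, (0 < j)%N -> 0 < a j)
  (n k : nat) (hn : (1 <= n)%N) (hk : (1 <= k)%N) (t : R) :
  theta a n k t = (k`!%:R)^-1 * \det (thetaMx a n k t).
Proof.
case: n hn => [//|n] _; case: k hk => [//|k] _.
rewrite theta_Ssum thetaMx_H detH newtonS mulrA -natrM mulnC -factS mulKf //.
by rewrite pnatr_eq0 -lt0n fact_gt0.
Qed.
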